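(* Let $d\ge 3$. For $1\le i\le d$ let $h_i=a_1a_2\cdots a_{i-1}a_ia_{i-1}\cdots a_3a_2$ (so $h_1=a_1$, $h_2=a_1a_2$, $h_3=a_1a_2a_3a_2$, etc.). Then $h_i$ has infinite order in $G_d$ for every $1\le i\le d$.
   Context: Let $d\ge 3$, $X=\{1,\dots,d\}$, $T$ the $d$-regular rooted tree with vertex set $X^*$. $\mathrm{Aut}(T)$ is the group of root-preserving automorphisms with product left-to-right: $(gh)(u)=h(g(u))$. Sections $g|_u$ are defined by $g(uv)=g(u)\,g|_u(v)$; we write $g=(g|_1,\dots,g|_d)\lambda_g$ with $\lambda_g\in S_d$ the action on the first level; $e$ is the identity; $\overline{j}\in\{1,\dots,d\}$ denotes $j$ mod $d$. $G_d=\langle a_1,\dots,a_d\rangle\le\mathrm{Aut}(T)$ where $a_i$ acts on the first level as $(i\ \overline{i+1})$, with $a_i|_i=a_i$, $a_i|_{\overline{i+1}}=a_{\overline{i+1}}$, and $a_i|_x=e$ otherwise. *)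

(* Defs.v *)
From mathcomp Require Import all_boot.
Set Implicit Arguments. Unset Strict Implicit. Unset Printing Implicit Defensive.

(* Alphabet X = {1,...,d} is encoded as 'I_d (letter k : 'I_d stands for k+1).
   Vertices of the d-regular rooted tree T are words u : seq 'I_d.
   The cyclic successor  j |-> \overline{j+1}  is [ordS]. *)

(* Action of the generator a_i on a vertex:
   a_i (x w) = (i i+1)(x) . (a_i|_x)(w), with a_i|_i = a_i, a_i|_{i+1} = a_{i+1},
   and a_i|_x = e otherwise. *)
Fixpoint gen_act (d : nat) (i : 'I_d) (w : seq 'I_d) : seq 'I_d :=
  match w with
  | [::] => [::]
  | x :: w' =>
      if x == i then ordS i :: gen_act i w'
      else if x == ordS i then i :: gen_act (ordS i) w'
      else x :: w'
  end.

(* An element of G_d given as a word s = [:: i1; ...; ik] in the generators,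
   i.e. the product a_{i1} a_{i2} ... a_{ik}.  Products are left-to-right:
   (gh)(u) = h(g(u)), so a_{i1} acts first. *)
Definition word_act (d : nat) (s : seq 'I_d) (u : seq 'I_d) : seq 'I_d :=
  foldl (fun v i => gen_act i v) u s.

(* h_i = a_1 a_2 ... a_{i-1} a_i a_{i-1} ... a_3 a_2  (0-based index i : 'I_d):
   generators with index <= i in increasing order, then those with
   0 < index < i in decreasing order. *)
Definition h_word (d : nat) (i : 'I_d) : seq 'I_d :=
  [seq x <- enum 'I_d | (nat_of_ord x <= nat_of_ord i)%N]
  ++ rev [seq x <- enum 'I_d | (0 < nat_of_ord x < nat_of_ord i)%N].

Definition infinite_order (d : nat) (g : seq 'I_d -> seq 'I_d) : Prop :=
  forall n : nat, (0 < n)%N -> exists u : seq 'I_d, iter n g u <> u.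

(* Main.v *)
Require Import Defs.
From mathcomp Require Import all_boot.
From mathcomp Require Import zify.
Set Implicit Arguments. Unset Strict Implicit. Unset Printing Implicit Defensive.

Definition pn (N j x : nat) : nat :=
  if x == j then j.+1 %% N else if x == j.+1 %% N then j else x.
Definition sn (N j x : nat) : seq nat :=
  if x == j then [:: j] else if x == j.+1 %% N then [:: j.+1 %% N] else [::].
Definition permn N (L : seq nat) x := foldl (fun x j => pn N j x) x L.
Fixpoint secn N (L : seq nat) x : seq nat :=
  if L is j :: L' then sn N j x ++ secn N L' (pn N j x) else [::].
Definition pown (L : seq nat) m := flatten (nseq m L).

Lemma permn_cat N L1 L2 x : permn N (L1 ++ L2) x = permn N L2 (permn N L1 x).
Proof. by rewrite /permn foldl_cat. Qed.
Lemma secn_cat N L1 L2 x : secn N (L1 ++ L2) x = secn N L1 x ++ secn N L2 (permn N L1 x).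
Proof. by elim: L1 x => [|j L IH] x //=; rewrite IH catA. Qed.
Lemma permn_cons N j L x : permn N (j :: L) x = permn N L (pn N j x).
Proof. by []. Qed.

Definition perm1 d (i x : 'I_d) : 'I_d :=
  if x == i then ordS i else if x == ordS i then i else x.
Definition sec1 d (i x : 'I_d) : seq 'I_d :=
  if x == i then [:: i] else if x == ordS i then [:: ordS i] else [::].
Definition perm_w d (s : seq 'I_d) x := foldl (fun x j => perm1 j x) x s.
Fixpoint sec_w d (s : seq 'I_d) x : seq 'I_d :=
  if s is j :: s' then sec1 j x ++ sec_w s' (perm1 j x) else [::].
Definition pow d (s : seq 'I_d) m := flatten (nseq m s).

Lemma word_act_cat d (s1 s2 : seq 'I_d) u : word_act (s1 ++ s2) u = word_act s2 (word_act s1 u).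
Proof. by rewrite /word_act foldl_cat. Qed.

Lemma gen_act_cons d (i x : 'I_d) w : gen_act i (x :: w) = perm1 i x :: word_act (sec1 i x) w.
Proof. by rewrite /= /perm1 /sec1; case: (x == i) => //; case: (x == ordS i). Qed.

Lemma wa_cons d (s : seq 'I_d) x w :
  word_act s (x :: w) = perm_w s x :: word_act (sec_w s x) w.
Proof.
elim: s x w => [|j s IH] x w //.
rewrite -[word_act (j :: s) _]/(word_act s (gen_act j (x :: w))) gen_act_cons IH.
by rewrite -word_act_cat.
Qed.

Lemma iter_wa d (s : seq 'I_d) n u : iter n (word_act s) u = word_act (pow s n) u.
Proof.
elim: n u => [|n IH] u //; rewrite iterSr IH /pow /= word_act_cat //.
Qed.

Lemma perm_w_cat d (s1 s2 : seq 'I_d) x : perm_w (s1 ++ s2) x = perm_w s2 (perm_w s1 x).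
Proof. by rewrite /perm_w foldl_cat. Qed.
Lemma sec_w_cat d (s1 s2 : seq 'I_d) x : sec_w (s1 ++ s2) x = sec_w s1 x ++ sec_w s2 (perm_w s1 x).
Proof. by elim: s1 x => [|j L IH] x //=; rewrite IH catA. Qed.

Lemma perm_w_pow d (s : seq 'I_d) n x : perm_w (pow s n) x = iter n (perm_w s) x.
Proof. elim: n x => [|n IH] x //; by rewrite iterSr /pow /= perm_w_cat -IH. Qed.

Lemma pow_mul d (s : seq 'I_d) m k : pow s (m * k) = pow (pow s m) k.
Proof.
elim: k => [|k IH]; first by rewrite muln0.
by rewrite mulnS /pow nseqD flatten_cat -/(pow s m) -/(pow s _) IH.
Qed.

Lemma sec_w_powk d (s t : seq 'I_d) x m k :
  perm_w (pow s m) x = x -> sec_w (pow s m) x = t -> sec_w (pow s (m * k)) x = pow t k.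
Proof.
move=> Hp Hs; rewrite pow_mul; elim: k => [|k IH] //.
by rewrite /pow /= sec_w_cat Hs Hp -/(pow _ k) IH.
Qed.

Lemma perm_w_powk d (s : seq 'I_d) x m k :
  perm_w (pow s m) x = x -> perm_w (pow s (m * k)) x = x.
Proof.
move=> Hp; rewrite pow_mul; elim: k => [|k IH] //.
by rewrite /pow /= perm_w_cat Hp -/(pow _ k) IH.
Qed.

Lemma iter_mod T (p : T -> T) x m n : iter m p x = x -> iter n p x = iter (n %% m) p x.
Proof.
move=> Hm; rewrite {1}(divn_eq n m) addnC iterD.
suff -> : forall q, iter (q * m) p x = x by [].
by elim=> [|q IH] //; rewrite mulSn iterD IH Hm.
Qed.

Lemma io_step d (s t : seq 'I_d) x m n :
  0 < m -> iter m (perm_w s) x = x ->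
  (forall j, 0 < j < m -> iter j (perm_w s) x != x) ->
  sec_w (pow s m) x = t -> 0 < n ->
  (forall k, 0 < k -> n = m * k -> exists u, word_act (pow t k) u <> u) ->
  exists u, word_act (pow s n) u <> u.
Proof.
move=> m0 Hm Hj Hs n0 IH.
have Hp : perm_w (pow s m) x = x by rewrite perm_w_pow.
case: (boolP (m %| n)) => [/dvdnP [k Hk] | Hnd].
  have k0 : 0 < k by move: n0; rewrite Hk; case: k {Hk}.
  have [u Hu] := IH k k0 (etrans Hk (mulnC _ _)).
  exists (x :: u); rewrite Hk mulnC wa_cons (perm_w_powk _ Hp) (sec_w_powk _ Hp Hs).
  by case.
exists [:: x]; rewrite wa_cons perm_w_pow (iter_mod n Hm) => -[] H.
suff: 0 < n %% m < m by move/Hj; rewrite H eqxx.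
by rewrite ltn_pmod // andbT lt0n; apply: contra Hnd => /eqP H0; apply/dvdnP; exists (n %/ m); rewrite {1}(divn_eq n m) H0 addn0.
Qed.

Lemma perm1_val d (j x : 'I_d) : val (perm1 j x) = pn d (val j) (val x).
Proof.
rewrite /perm1 /pn -val_eqE.
have -> : (x == ordS j) = (val x == j.+1 %% d) by rewrite -val_eqE.
by case: ifP => //; case: ifP.
Qed.
Lemma sec1_val d (j x : 'I_d) : map val (sec1 j x) = sn d (val j) (val x).
Proof.
rewrite /sec1 /sn -val_eqE.
have -> : (x == ordS j) = (val x == j.+1 %% d) by rewrite -val_eqE.
by case: ifP => //; case: ifP.
Qed.
Lemma perm_w_val d (s : seq 'I_d) x : val (perm_w s x) = permn d (map val s) (val x).
Proof. elim: s x => [|j s IH] x //=; by rewrite -perm1_val -IH. Qed.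
Lemma sec_w_val d (s : seq 'I_d) x : map val (sec_w s x) = secn d (map val s) (val x).
Proof. elim: s x => [|j s IH] x //=; by rewrite map_cat sec1_val IH perm1_val. Qed.
Lemma pow_val d (s : seq 'I_d) m : map val (pow s m) = pown (map val s) m.
Proof. by rewrite /pow /pown map_flatten map_nseq. Qed.
Lemma iter_val d (s : seq 'I_d) x j : val (iter j (perm_w s) x) = iter j (permn d (map val s)) (val x).
Proof. elim: j => [|j IH] //=; by rewrite perm_w_val IH. Qed.

Lemma untouched N L x : all (fun j => (x != j) && (x != j.+1 %% N)) L ->
  permn N L x = x /\ secn N L x = [::].
Proof.
elim: L => [|j L IH] //= /andP [/andP [H1 H2] /IH [IH1 IH2]].
by rewrite /pn /sn (negbTE H1) (negbTE H2) IH1 IH2.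
Qed.

Lemma asc N b a : a + b < N -> permn N (iota a b) a = a + b /\ secn N (iota a b) a = iota a b.
Proof.
elim: b a => [|b IH] a H; first by rewrite addn0.
have Ha : a.+1 %% N = a.+1 by rewrite modn_small //; lia.
have [H1 H2] := IH a.+1 ltac:(lia).
by rewrite /= /pn /sn eqxx Ha H1 H2 addnS.
Qed.

Lemma desc N b a : a + b < N ->
  permn N (rev (iota a b)) (a + b) = a /\ secn N (rev (iota a b)) (a + b) = rev (iota a.+1 b).
Proof.
elim: b a => [|b IH] a H; first by rewrite addn0.
have E : forall c, rev (iota c b.+1) = (c + b) :: rev (iota c b).
  by move=> c; rewrite -addn1 iotaD rev_cat.
have Ha : (a + b).+1 %% N = (a + b).+1 by rewrite modn_small //; lia.
have [H1 H2] := IH a ltac:(lia).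
rewrite !E permn_cons /= /pn /sn addnS Ha eqxx.
have -> : ((a + b).+1 == a + b) = false by lia.
by rewrite H1 H2 addSn.
Qed.

Lemma modS n j : j <= n -> (j = n /\ j.+1 %% n.+1 = 0) \/ (j < n /\ j.+1 %% n.+1 = j.+1).
Proof.
move=> H; case: (ltngtP j n) => [lt|gt|eq]; last by left; split=> //; rewrite eq modnn.
  by right; split=> //; rewrite modn_small.
lia.
Qed.

Ltac untac n := apply/allP => j; rewrite ?mem_rev mem_iota => Hj;
  have := @modS n j ltac:(lia); lia.

Lemma iota_split a b c : b <= c -> iota a c = iota a b ++ iota (a + b) (c - b).
Proof. by move=> H; rewrite -iotaD subnKC. Qed.

Lemma pn_hit N j : pn N j j = j.+1 %% N /\ sn N j j = [:: j].
Proof. by rewrite /pn /sn eqxx. Qed.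

Lemma pn_high N j x : x != j -> x = j.+1 %% N -> pn N j x = j /\ sn N j x = [:: x].
Proof. by move=> H1 H2; rewrite /pn /sn (negbTE H1) H2 eqxx. Qed.

Definition Hn i := iota 0 i.+1 ++ rev (iota 1 i.-1).

Lemma H0_0 n : 2 <= n -> permn n.+1 (Hn 0) 0 = 1 /\ secn n.+1 (Hn 0) 0 = [:: 0].
Proof. move=> hn; rewrite /= /pn /sn /= modn_small //; lia. Qed.
Lemma H0_1 n : 2 <= n -> permn n.+1 (Hn 0) 1 = 0 /\ secn n.+1 (Hn 0) 1 = [:: 1].
Proof. move=> hn; rewrite /= /pn /sn /= modn_small //; lia. Qed.

Lemma Hi_0 n i : 1 <= i -> i < n ->
  permn n.+1 (Hn i) 0 = i.+1 /\ secn n.+1 (Hn i) 0 = iota 0 i.+1.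
Proof.
move=> h1 h2; rewrite /Hn permn_cat secn_cat.
have [A1 A2] := @asc n.+1 i.+1 0 ltac:(lia).
rewrite A1 A2 add0n.
have [B1 B2] := @untouched n.+1 (rev (iota 1 i.-1)) i.+1 ltac:(untac n).
by rewrite B1 B2 cats0.
Qed.

Lemma Hi_i n i : 1 <= i -> i < n ->
  permn n.+1 (Hn i) i.+1 = 1 /\ secn n.+1 (Hn i) i.+1 = i.+1 :: rev (iota 2 i.-1).
Proof.
move=> h1 h2; rewrite /Hn (iota_split 0 (b := i)) // add0n subSnn.
rewrite !permn_cat !secn_cat.
have [A1 A2] := @untouched n.+1 (iota 0 i) i.+1 ltac:(untac n).
rewrite A1 A2 /=.
have [B1 B2] := @pn_high n.+1 i i.+1 ltac:(lia) ltac:(rewrite modn_small //; lia).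
rewrite B1 B2.
have [C1 C2] := @desc n.+1 i.-1 1 ltac:(lia).
have E : 1 + i.-1 = i by lia.
rewrite E in C1 C2.
have P : permn n.+1 (iota 0 i ++ [:: i]) i.+1 = i by rewrite permn_cat A1 /permn /= B1.
by rewrite P C2 C1.
Qed.

Lemma Hi_1 n i : 1 <= i -> i < n ->
  permn n.+1 (Hn i) 1 = 0 /\ secn n.+1 (Hn i) 1 = [:: 1].
Proof.
move=> h1 h2; rewrite /Hn -[iota 0 i.+1]/(0 :: iota 1 i) -cat1s -catA.
rewrite !permn_cat !secn_cat.
have [B1 B2] := @pn_high n.+1 0 1 ltac:(lia) ltac:(rewrite modn_small //; lia).
rewrite /= /pn /sn /=.
have -> : (1 == 1 %% n.+1) by rewrite modn_small //; lia.
rewrite /= -/(permn n.+1 _ 0) -/(secn n.+1 _ 0) -permn_cat -secn_cat.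
have [C1 C2] := @untouched n.+1 (iota 1 i ++ rev (iota 1 i.-1)) 0
  ltac:(rewrite all_cat; apply/andP; split; untac n).
by rewrite C1 C2 modn_small //; lia.
Qed.

Lemma Hn_0 n : 2 <= n -> permn n.+1 (Hn n) 0 = 0 /\ secn n.+1 (Hn n) 0 = iota 0 n.+1.
Proof.
move=> hn; rewrite /Hn (iota_split 0 (b := n)) // add0n subSnn.
rewrite !permn_cat !secn_cat.
have [A1 A2] := @asc n.+1 n 0 ltac:(lia).
rewrite add0n in A1; rewrite A1 A2.
have P : permn n.+1 [:: n] n = 0 by rewrite /permn /= /pn eqxx modnn.
have S : secn n.+1 [:: n] n = [:: n] by rewrite /= /sn eqxx.
rewrite P S.
have [B1 B2] := @untouched n.+1 (rev (iota 1 n.-1)) 0 ltac:(untac n).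
by rewrite B1 permn_cat A1 P B2 cats0.
Qed.

Definition Gn n := iota 0 n.+1.

Lemma G_1 n : 2 <= n -> permn n.+1 (Gn n) 1 = n /\ secn n.+1 (Gn n) 1 = [:: 1; 0].
Proof.
move=> hn.
have E : Gn n = [:: 0] ++ iota 1 n.-1 ++ [:: n].
  rewrite /Gn -[iota 0 n.+1]/(0 :: iota 1 n) (iota_split 1 (b := n.-1)); last lia.
  have -> : 1 + n.-1 = n by lia.
  by have -> : n - n.-1 = 1 by lia.
rewrite E !permn_cat !secn_cat.
have [B1 B2] := @pn_high n.+1 0 1 ltac:(lia) ltac:(rewrite modn_small //; lia).
have P1 : permn n.+1 [:: 0] 1 = 0 by rewrite /permn /= B1.
have S1 : secn n.+1 [:: 0] 1 = [:: 1] by rewrite /= B2.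
rewrite P1 S1.
have [C1 C2] := @untouched n.+1 (iota 1 n.-1) 0 ltac:(untac n).
rewrite C1 C2.
have [D1 D2] := @pn_high n.+1 n 0 ltac:(lia) ltac:(by rewrite modnn).
by rewrite /permn /= D1 /= D2.
Qed.

Lemma G_k n k : 2 <= n -> 2 <= k <= n ->
  permn n.+1 (Gn n) k = k.-1 /\ secn n.+1 (Gn n) k = [:: k].
Proof.
move=> hn hk.
have E : Gn n = iota 0 k.-1 ++ [:: k.-1] ++ iota k (n.+1 - k).
  rewrite /Gn (iota_split 0 (b := k.-1)); last lia.
  have -> : n.+1 - k.-1 = (n.+1 - k).+1 by lia.
  by rewrite /= add0n prednK //; lia.
rewrite E !permn_cat !secn_cat.
have [A1 A2] := @untouched n.+1 (iota 0 k.-1) k ltac:(untac n).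
rewrite A1 A2.
have [B1 B2] := @pn_high n.+1 k.-1 k ltac:(lia) ltac:(rewrite prednK ?modn_small //; lia).
have P1 : permn n.+1 [:: k.-1] k = k.-1 by rewrite /permn /= B1.
have S1 : secn n.+1 [:: k.-1] k = [:: k] by rewrite /= B2.
rewrite P1 S1.
have [C1 C2] := @untouched n.+1 (iota k (n.+1 - k)) k.-1 ltac:(untac n).
by rewrite C1 C2.
Qed.

Definition Tn n := [:: 1; 0] ++ rev (iota 2 n.-1).

Lemma descT n k : 2 <= n -> 2 <= k <= n ->
  permn n.+1 (rev (iota 2 n.-1)) k = k.+1 %% n.+1 /\ secn n.+1 (rev (iota 2 n.-1)) k = [:: k].
Proof.
move=> hn hk.
have E : rev (iota 2 n.-1) = rev (iota k.+1 (n - k)) ++ [:: k] ++ rev (iota 2 (k - 2)).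
  rewrite (iota_split 2 (b := k - 2)); last lia.
  have -> : 2 + (k - 2) = k by lia.
  have -> : n.-1 - (k - 2) = (n - k).+1 by lia.
  by rewrite /= rev_cat rev_cons -cats1 -catA.
rewrite E !permn_cat !secn_cat.
have [A1 A2] := @untouched n.+1 (rev (iota k.+1 (n - k))) k ltac:(untac n).
rewrite A1 A2.
have [B1 B2] := pn_hit n.+1 k.
have P1 : permn n.+1 [:: k] k = k.+1 %% n.+1 by rewrite /permn /= B1.
have S1 : secn n.+1 [:: k] k = [:: k] by rewrite /= B2.
rewrite P1 S1.
have [C1 C2] := @untouched n.+1 (rev (iota 2 (k - 2))) (k.+1 %% n.+1)
  ltac:(apply/allP => j; rewrite mem_rev mem_iota => Hj;
        have := @modS n j ltac:(lia); have := @modS n k ltac:(lia); lia).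
by rewrite C1 C2.
Qed.

Lemma T_0 n : 2 <= n -> permn n.+1 (Tn n) 0 = 1 /\ secn n.+1 (Tn n) 0 = [:: 0].
Proof.
move=> hn; rewrite /Tn permn_cat secn_cat.
have P : permn n.+1 [:: 1; 0] 0 = 1 /\ secn n.+1 [:: 1; 0] 0 = [:: 0].
  rewrite /permn /= /pn /sn /= !modn_small //; lia.
case: P => -> ->.
have [C1 C2] := @untouched n.+1 (rev (iota 2 n.-1)) 1 ltac:(untac n).
by rewrite C1 C2.
Qed.

Lemma T_1 n : 2 <= n -> permn n.+1 (Tn n) 1 = 3 %% n.+1 /\ secn n.+1 (Tn n) 1 = [:: 1; 2].
Proof.
move=> hn; rewrite /Tn permn_cat secn_cat.
have P : permn n.+1 [:: 1; 0] 1 = 2 /\ secn n.+1 [:: 1; 0] 1 = [:: 1].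
  rewrite /permn /= /pn /sn /= !modn_small //; lia.
case: P => -> ->.
have [C1 C2] := @descT n 2 hn ltac:(lia).
by rewrite C1 C2.
Qed.

Lemma T_k n k : 2 <= n -> 3 <= k <= n ->
  permn n.+1 (Tn n) k = k.+1 %% n.+1 /\ secn n.+1 (Tn n) k = [:: k].
Proof.
move=> hn hk; rewrite /Tn permn_cat secn_cat.
have P : permn n.+1 [:: 1; 0] k = k /\ secn n.+1 [:: 1; 0] k = [::].
  apply: untouched => /=; rewrite !modn_small //; lia.
case: P => -> ->.
have [C1 C2] := @descT n k hn ltac:(lia).
by rewrite C1 C2.
Qed.

Lemma secn_pown N L m x :
  secn N (pown L m) x = flatten [seq secn N L (iter j (permn N L) x) | j <- iota 0 m].
Proof.
elim: m x => [|m IH] x //.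
rewrite /pown /= secn_cat -/(pown L m) IH /=; congr (_ ++ _).
rewrite -[1]/(1 + 0) iotaDl -map_comp; congr flatten; apply: eq_map => j /=.
by rewrite add0n -iterS iterSr.
Qed.

Lemma permn_pown N L m x : permn N (pown L m) x = iter m (permn N L) x.
Proof.
elim: m x => [|m IH] x //.
by rewrite /pown /= permn_cat -/(pown L m) IH -iterS iterSr.
Qed.

Lemma flattenC T (a : seq T) l : flatten (a :: l) = a ++ flatten l.
Proof. by []. Qed.

Lemma flatten1 (f : nat -> nat) s : flatten [seq [:: f j] | j <- s] = map f s.
Proof. by elim: s => [|j s IH] //=; rewrite IH. Qed.

Lemma rev_iota_map a b : rev (iota a b) = map (fun j => a + b - j) (iota 1 b).
Proof.
elim: b a => [|b IH] a //.
have E : rev (iota a b.+1) = (a + b) :: rev (iota a b).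
  by rewrite -addn1 iotaD rev_cat.
rewrite E IH -[iota 1 b.+1]/(1 :: iota 2 b) -[2]/(1 + 1) iotaDl /= -map_comp.
congr (_ :: _); first lia.
apply: eq_map => j /=; lia.
Qed.

Lemma G_iter n j : 2 <= n -> 1 <= j <= n -> iter j (permn n.+1 (Gn n)) 1 = n.+1 - j.
Proof.
move=> hn; elim: j => [|j IH] // hj.
case: (posnP j) => [->|jp]; first by rewrite -[iter 1 _ _]/(permn n.+1 (Gn n) 1) (G_1 hn).1 subn1.
rewrite iterS IH; last lia.
rewrite (@G_k n (n.+1 - j) hn ltac:(lia)).1; lia.
Qed.

Lemma G_sec n : 2 <= n -> secn n.+1 (pown (Gn n) n) 1 = Tn n.
Proof.
move=> hn; rewrite secn_pown.
have -> : iota 0 n = 0 :: iota 1 n.-1 by rewrite -{1}(prednK (ltnW hn)).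
rewrite map_cons flattenC -[iter 0 _ 1]/1 (G_1 hn).2 /Tn.
rewrite (_ : map _ (iota 1 n.-1) = map (fun j => [:: n.+1 - j]) (iota 1 n.-1)) ?flatten1; last first.
  apply/eq_in_map => j; rewrite mem_iota => hj; rewrite G_iter //; last lia.
  by rewrite (@G_k n (n.+1 - j) hn ltac:(lia)).2.
congr (_ ++ _); rewrite rev_iota_map; apply: eq_map => j; lia.
Qed.

Lemma T_iter n j : 2 <= n -> 2 <= j <= n -> iter j (permn n.+1 (Tn n)) 0 = j.+1 %% n.+1.
Proof.
move=> hn; elim: j => [|j IH] // hj.
case: (ltngtP j 1) => [jl|jg|->]; first lia; last first.
  by rewrite -[iter 2 _ 0]/(permn n.+1 (Tn n) (permn n.+1 (Tn n) 0)) (T_0 hn).1 (T_1 hn).1.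
rewrite iterS IH; last lia.
rewrite modn_small; last lia.
by rewrite (@T_k n j.+1 hn ltac:(lia)).1.
Qed.

Lemma T_sec n : 2 <= n -> secn n.+1 (pown (Tn n) n) 0 = Gn n.
Proof.
move=> hn; rewrite secn_pown.
have -> : iota 0 n = 0 :: 1 :: iota 2 (n - 2) by rewrite -{1}(subnKC hn).
rewrite !map_cons !flattenC -[iter 0 _ 0]/0 (T_0 hn).2 -[iter 1 _ 0]/(permn n.+1 (Tn n) 0) (T_0 hn).1 (T_1 hn).2.
rewrite (_ : map _ (iota 2 (n - 2)) = map (fun j => [:: j.+1]) (iota 2 (n - 2))) ?flatten1; last first.
  apply/eq_in_map => j; rewrite mem_iota => hj; rewrite T_iter //; last lia.
  rewrite modn_small; last lia.
  by rewrite (@T_k n j.+1 hn ltac:(lia)).2.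
rewrite /Gn -[iota 0 n.+1]/(0 :: iota 1 n).
have -> : iota 1 n = [:: 1, 2 & iota 3 (n - 2)] by rewrite -{1}(subnKC hn).
by rewrite -[3]/(1 + 2) iotaDl.
Qed.

Lemma H0_sec n : 2 <= n -> secn n.+1 (pown (Hn 0) 2) 0 = Hn 1.
Proof.
move=> hn; rewrite secn_pown -[iota 0 2]/[:: 0; 1] !map_cons !flattenC.
have I1 : iter 1 (permn n.+1 (Hn 0)) 0 = 1 by exact: (H0_0 hn).1.
by rewrite I1 -[iter 0 _ 0]/0 (H0_0 hn).2 (H0_1 hn).2.
Qed.

Lemma Hi_sec n i : 1 <= i -> i < n -> secn n.+1 (pown (Hn i) 3) 0 = Hn i.+1.
Proof.
move=> h1 h2; rewrite secn_pown -[iota 0 3]/[:: 0; 1; 2] !map_cons !flattenC.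
have I1 : iter 1 (permn n.+1 (Hn i)) 0 = i.+1 by exact: (Hi_0 h1 h2).1.
have I2 : iter 2 (permn n.+1 (Hn i)) 0 = 1.
  rewrite -[iter 2 _ 0]/(permn n.+1 (Hn i) (iter 1 (permn n.+1 (Hn i)) 0)) I1.
  exact: (Hi_i h1 h2).1.
rewrite I1 I2 -[iter 0 _ 0]/0 (Hi_0 h1 h2).2 (Hi_i h1 h2).2 (Hi_1 h1 h2).2 /Hn /=.
case: i h1 h2 {I1 I2} => [//|i] _ _.
have E1 : iota 2 i.+1 = iota 2 i ++ [:: i.+2] by have := iotaD 2 i 1; rewrite addn1 => ->; rewrite /= add2n.
rewrite -[iota 1 i.+1]/(1 :: iota 2 i) E1 rev_cons -cats1 /=.
by rewrite -!catA.
Qed.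

Lemma io_step_v d (s t : seq 'I_d) (x : 'I_d) m n :
  0 < m -> iter m (permn d (map val s)) (val x) = val x ->
  (forall j, 0 < j < m -> iter j (permn d (map val s)) (val x) != val x) ->
  secn d (pown (map val s) m) (val x) = map val t -> 0 < n ->
  (forall k, 0 < k -> n = m * k -> exists u, word_act (pow t k) u <> u) ->
  exists u, word_act (pow s n) u <> u.
Proof.
move=> m0 Hm Hj Hs n0 IH; apply: (io_step (t := t) (x := x) m0) => //.
- by apply: val_inj; rewrite iter_val.
- by move=> j hj; rewrite -val_eqE iter_val; apply: Hj.
- by apply: (inj_map val_inj); rewrite sec_w_val pow_val.
Qed.

Lemma map_inordK n (L : seq nat) : all (fun k => k <= n) L -> map val (map (@inord n) L) = L.
Proof. by elim: L => [|k L IH] //= /andP [hk /IH ->]; rewrite inordK. Qed.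

Lemma val_inord n k : k <= n -> val (@inord n k) = k.
Proof. exact: inordK. Qed.

Definition tw n : seq 'I_n.+1 := map (@inord n) (Tn n).

Lemma tw_val n : 2 <= n -> map val (tw n) = Tn n.
Proof.
move=> hn; apply: map_inordK; rewrite /Tn /= all_rev; apply/andP; split; first lia.
by apply/allP => k; rewrite mem_iota; lia.
Qed.

Lemma g_val n : map val (enum 'I_n.+1) = Gn n.
Proof. exact: val_enum_ord. Qed.

Lemma IO_GT n : 2 <= n -> forall N0 k, 0 < k <= N0 ->
  (exists u, word_act (pow (enum 'I_n.+1) k) u <> u) /\ (exists u, word_act (pow (tw n) k) u <> u).
Proof.
move=> hn; elim=> [|N0 IH] k hk; first lia.
split.
- apply: (@io_step_v _ _ (tw n) (inord 1) n) => //; first lia.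
  + by rewrite g_val val_inord ?G_iter ?subSnn //; lia.
  + move=> j hj; rewrite g_val val_inord ?G_iter //; lia.
  + by rewrite g_val val_inord ?G_sec ?tw_val //; lia.
  + lia.
  + move=> k' hk' e; apply: (IH k' _).2; nia.
- apply: (@io_step_v _ _ (enum 'I_n.+1) (inord 0) n) => //; first lia.
  + by rewrite tw_val // val_inord ?T_iter ?modnn //; lia.
  + move=> j hj; rewrite tw_val // val_inord //.
    case: (ltngtP j 1) => [|jg|->]; first lia.
      by rewrite T_iter ?modn_small //; lia.
    by rewrite -[iter 1 _ 0]/(permn n.+1 (Tn n) 0) (T_0 hn).1.
  + by rewrite tw_val // val_inord ?T_sec ?g_val //; lia.
  + lia.
  + move=> k' hk' e; apply: (IH k' _).1; nia.
Qed.

Lemma map_val_filter n (P : pred nat) (s : seq 'I_n) :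
  map val (filter (fun x => P (val x)) s) = filter P (map val s).
Proof. by elim: s => [|x s IH] //=; case: (P (val x)) => /=; rewrite IH. Qed.

Lemma h_val n (i : 'I_n.+1) : map val (h_word i) = Hn (val i).
Proof.
rewrite /h_word map_cat map_rev.
have E1 := map_val_filter (fun k => k <= i) (enum 'I_n.+1).
have E2 := map_val_filter (fun k => 0 < k < i) (enum 'I_n.+1).
rewrite /= in E1 E2; rewrite E1 E2 val_enum_ord /Hn.
have := @filter_iota_leq n.+1 0 i (ltn_ord i); rewrite add0n => ->.
congr (_ ++ rev _).
rewrite -[iota 0 n.+1]/(0 :: iota 1 n) /=.
case: (posnP i) => [->|ip].
  by rewrite (@eq_in_filter _ _ pred0) ?filter_pred0 // => k; rewrite mem_iota /=; lia.
rewrite (@eq_in_filter _ _ (fun k => k < 1 + i.-1)); last by move=> k; rewrite mem_iota; lia.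
by rewrite filter_iota_ltn //; have := ltn_ord i; lia.
Qed.

Lemma IO_h n : 2 <= n -> forall k (i : 'I_n.+1), val i + k = n ->
  forall m, 0 < m -> exists u, word_act (pow (h_word i) m) u <> u.
Proof.
move=> hn; elim=> [|k IH] i hi m hm.
- rewrite addn0 in hi.
  apply: (@io_step_v _ _ (enum 'I_n.+1) ord0 1) => //.
  + by rewrite h_val hi; exact: (Hn_0 hn).1.
  + lia.
  + by rewrite h_val g_val hi /pown -[flatten _]/(Hn n ++ [::]) cats0; exact: (Hn_0 hn).2.
  + move=> k' hk' e; exact: (@IO_GT n hn k' k' ltac:(lia)).1.
-   have hi1 : (val i).+1 <= n by lia.
  have IH' := IH (inord (val i).+1) ltac:(rewrite val_inord //; lia).
  case: (posnP (val i)) => [i0|ip].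
  + apply: (@io_step_v _ _ (h_word (inord (val i).+1)) ord0 2) => //.
    * rewrite h_val i0 -[iter 2 _ _]/(permn n.+1 (Hn 0) (permn n.+1 (Hn 0) 0)) (H0_0 hn).1.
      by rewrite (H0_1 hn).1.
    * move=> j hj; have -> : j = 1 by lia.
      by rewrite h_val i0 -[iter 1 _ _]/(permn n.+1 (Hn 0) 0) (H0_0 hn).1.
    * by rewrite !h_val val_inord // i0; exact: (H0_sec hn).
    * move=> k' hk' e; exact: IH'.
  + apply: (@io_step_v _ _ (h_word (inord (val i).+1)) ord0 3) => //.
    * rewrite h_val -[iter 3 _ _]/(permn n.+1 (Hn i) (permn n.+1 (Hn i) (permn n.+1 (Hn i) 0))).
      by rewrite (Hi_0 ip hi1).1 (Hi_i ip hi1).1 (Hi_1 ip hi1).1.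
    * move=> j hj; rewrite h_val.
      case: (ltngtP j 1) => [|jg|->]; first lia.
        have -> : j = 2 by lia.
        rewrite -[iter 2 _ _]/(permn n.+1 (Hn i) (permn n.+1 (Hn i) 0)).
        by rewrite (Hi_0 ip hi1).1 (Hi_i ip hi1).1.
      by rewrite -[iter 1 _ _]/(permn n.+1 (Hn i) 0) (Hi_0 ip hi1).1.
    * by rewrite !h_val val_inord //; exact: (Hi_sec ip hi1).
    * move=> k' hk' e; exact: IH'.
Qed.

Theorem lemma3p5 (d : nat) (hd : (3 <= d)%N) (i : 'I_d) :
  infinite_order (word_act (h_word i)).
Proof.
case: d hd i => [//|n] hd i m hm.
have [u Hu] := @IO_h n hd (n - val i) i (@subnKC (val i) n (ltn_ord i)) m hm.
by exists u; rewrite iter_wa.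
Qed.
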